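(* Let $L$ be a finite lattice, $\varphi\in M_1(L)$, and let $G$ be a tree whose vertex set is a nonempty subset of $L$. Then $\varphi(G)\le B_\varphi(\langle G\rangle^* )$, where $$\varphi(G)=\sum_{a\in G}\varphi(a)-\sum_{\{a,b\}\in E(G)}\varphi(a\vee b).$$
   Context: $L$ is a finite lattice with join $\vee$ and meet $\wedge$. A tree is a connected acyclic graph; $G$ also denotes its vertex set and $E(G)$ its edge set (unordered pairs of vertices). For $A\subseteq L$, $\langle A\rangle^*=\{x\in L: x\ge a\text{ for some }a\in A\}$. $\mathcal L$ is the set of nonempty up-sets of $L$, ordered by $U\preceq V$ iff $U\supseteq V$ (meet = union). $M_1(L)$ is the set of nonnegative monotone functions on $L$; $M_\infty(\mathcal L)$ is the set of nonnegative completely monotone functions on $(\mathcal L,\preceq)$ (all iterated differences $\nabla_{U}\Phi(W)=\Phi(W)-\Phi(W\wedge U)$ nonnegative). For $\varphi\in M_1(L)$ and $U\in\mathcal L$, $B_\varphi(U)=\min\{\Phi(U):\Phi\in M_\infty(\mathcal L),\ \Phi(\langle x\rangle^* )=\varphi(x)\ \forall x\in L\}$. *)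

(* Defs.v *)
From HB Require Import structures.
From mathcomp Require Import all_boot all_order all_algebra.
From mathcomp Require Import reals.
Set Implicit Arguments. Unset Strict Implicit. Unset Printing Implicit Defensive.
Import Order.TTheory GRing.Theory Num.Theory.
Local Open Scope ring_scope.

Section Defs.
Context {d : Order.disp_t} {L : finTBLatticeType d} {R : realType}.

Definition upcl (A : {set L}) : {set L} :=
  [set x | [exists a in A, (a <= x)%O]].

Definition is_upset (U : {set L}) : bool :=
  [forall x, forall y, (x \in U) && (x <= y)%O ==> (y \in U)].

Definition in_calL (U : {set L}) : bool := is_upset U && (U != set0).

Definition M1 (phi : L -> R) : Prop :=
  (forall x, 0 <= phi x) /\ (forall x y, (x <= y)%O -> phi x <= phi y).

(* nabla_U Phi (W) = Phi W - Phi (W /\ U), where meet in (calL, preceq) is union *)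
Definition nabla (U : {set L}) (Phi : {set L} -> R) : {set L} -> R :=
  fun W => Phi W - Phi (W :|: U).

(* M_infty(calL): nonnegative completely monotone functions on calL
   (the empty sequence of differences gives nonnegativity) *)
Definition Minf (Phi : {set L} -> R) : Prop :=
  forall (Us : seq {set L}) (W : {set L}),
    all in_calL Us -> in_calL W -> 0 <= foldr nabla Phi Us W.

Definition Bphi (phi : L -> R) (U : {set L}) : R :=
  inf (fun r : R => exists Phi : {set L} -> R,
        [/\ Minf Phi, (forall x, Phi (upcl [set x]) = phi x) & r = Phi U]).

Definition adj (E : {set {set L}}) : rel L := fun a b => [set a; b] \in E.

Definition is_graph (G : {set L}) (E : {set {set L}}) : Prop :=
  forall e, e \in E -> #|e| = 2%N /\ e \subset G.

Definition connected (G : {set L}) (E : {set {set L}}) : Prop :=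
  forall a b, a \in G -> b \in G -> connect (adj E) a b.

Definition acyclic (E : {set {set L}}) : Prop :=
  ~ exists s : seq L, [/\ uniq s, (3 <= size s)%N & cycle (adj E) s].

Definition is_tree (G : {set L}) (E : {set {set L}}) : Prop :=
  [/\ is_graph G E, connected G E & acyclic E].

Definition phiG (phi : L -> R) (G : {set L}) (E : {set {set L}}) : R :=
  \sum_(a in G) phi a - \sum_(e in E) phi (\join_(x in e) x)%O.

End Defs.

(* Main.v *)
Require Import Defs.
From HB Require Import structures.
From mathcomp Require Import all_boot all_order all_algebra.
From mathcomp Require Import reals.
From mathcomp Require Import lra.
Set Implicit Arguments. Unset Strict Implicit. Unset Printing Implicit Defensive.
Import Order.TTheory GRing.Theory Num.Theory.
Local Open Scope ring_scope.

Lemma ar (R : realType) (m u c : R) : 0 <= c ->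
  Num.max 0 (m - c) - Num.max 0 (Num.min m u - c) = Num.max 0 (m - Num.max u c).
Proof.
move=> c0; rewrite /Order.max /Order.min.
case: (ltP m u) => ?; case: (ltP u c) => ?; do ![case: ltP => ? /=]; lra.
Qed.

Section S.
Context {d : Order.disp_t} {L : finTBLatticeType d} {R : realType}.
Variable phi : L -> R.
Hypothesis hphi : M1 phi.

Definition mn (W : {set L}) : R := \big[Order.min/phi Order.top]_(w in W) phi w.

Lemma mn_geP m (W : {set L}) : reflect (m <= phi Order.top /\ forall w, w \in W -> m <= phi w) (m <= mn W).
Proof. exact: bigmin_geP. Qed.

Lemma mn_ge0 (W : {set L}) : 0 <= mn W.
Proof. case: hphi => h0 _; apply/mn_geP; split => //. Qed.

Lemma mnU (W U : {set L}) : mn (W :|: U) = Order.min (mn W) (mn U).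
Proof.
have [hT hU] : mn (W :|: U) <= phi Order.top /\ forall w, w \in W :|: U -> mn (W :|: U) <= phi w.
  exact/mn_geP.
have [hT1 hW] : mn W <= phi Order.top /\ forall w, w \in W -> mn W <= phi w.
  exact/mn_geP.
have [hT2 hV] : mn U <= phi Order.top /\ forall w, w \in U -> mn U <= phi w.
  exact/mn_geP.
apply/le_anti/andP; split.
- rewrite le_min; apply/andP; split; apply/mn_geP; split => // w wW; apply: hU;
    by rewrite inE wW ?orbT.
- apply/mn_geP; split.
  + by rewrite ge_min hT1.
  + move=> w; rewrite inE => /orP [] wW; rewrite ge_min.
    * by rewrite hW.
    * by rewrite hV ?orbT.
Qed.

Lemma fold_mn (Us : seq {set L}) (W : {set L}) : foldr nabla mn Us W =
  Order.max 0 (mn W - foldr (fun U c => Order.max (mn U) c) 0 Us).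
Proof.
elim: Us W => [|U Us IH] W /=.
  by rewrite subr0; apply/esym/max_idPr; apply: mn_ge0.
rewrite /nabla !IH mnU ar //.
by elim: Us {IH} => //= V Vs IHs; rewrite le_max IHs orbT.
Qed.

Lemma mn_Minf : Minf mn.
Proof. by move=> Us W _ _; rewrite fold_mn le_max lexx. Qed.

Lemma in_upcl1 (x y : L) : (y \in upcl [set x]) = (x <= y)%O.
Proof.
rewrite inE; apply/existsP/idP => [[a /andP [/set1P -> ]]|h] //.
by exists x; rewrite set11 h.
Qed.

Lemma mn_ext (x : L) : mn (upcl [set x]) = phi x.
Proof.
case: hphi => _ hm.
apply/le_anti/andP; split.
  by move/mn_geP: (lexx (mn (upcl [set x]))) => [_]; apply; rewrite in_upcl1.
apply/mn_geP; split; first by apply: hm; apply: lex1.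
by move=> w; rewrite in_upcl1; apply: hm.
Qed.

End S.
Section T.
Context {d : Order.disp_t} {L : finTBLatticeType d} {R : realType}.

Lemma upclU (A B : {set L}) : upcl (A :|: B) = upcl A :|: upcl B.
Proof.
apply/setP => x; rewrite !inE; apply/existsP/orP.
- move=> [a /andP [/setUP [] aA ax]]; [left|right]; apply/existsP; exists a; rewrite ?aA ?ax //.
- move=> [] /existsP [a /andP [aA ax]]; exists a; rewrite inE ax ?aA ?orbT //.
Qed.

Lemma upcl_calL (A : {set L}) : A != set0 -> in_calL (upcl A).
Proof.
move=> /set0Pn [a aA]; apply/andP; split.
  apply/forallP => x; apply/forallP => y; apply/implyP => /andP [].
  rewrite !inE => /existsP [b /andP [bA bx]] xy; apply/existsP; exists b.
  by rewrite bA (le_trans bx xy).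
by apply/set0Pn; exists a; rewrite inE; apply/existsP; exists a; rewrite aA lexx.
Qed.

Variable phi : L -> R.
Variable Phi : {set L} -> R.
Hypothesis hM : Minf Phi.
Hypothesis hext : forall x, Phi (upcl [set x]) = phi x.

Lemma step (U' : {set L}) (a w : L) : in_calL U' ->
  upcl [set w] \subset U' -> (a <= w)%O ->
  Phi U' + phi a - phi w <= Phi (U' :|: upcl [set a]).
Proof.
move=> hU sub aw.
have := hM (Us := [:: U'; upcl [set a]]) (W := upcl [set w]).
rewrite /= /nabla /=.
have -> : upcl [set w] :|: upcl [set a] = upcl [set a].
  apply/setUidPr/subsetP => x; rewrite !in_upcl1; exact: le_trans.
have -> : upcl [set w] :|: U' = U' by apply/setUidPr.
rewrite !hext.
have c1 : in_calL (upcl [set a]) by apply: upcl_calL; apply/set0Pn; exists a; rewrite set11.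
have c2 : in_calL (upcl [set w]) by apply: upcl_calL; apply/set0Pn; exists w; rewrite set11.
rewrite /= hU c1 c2 /= => /(_ isT isT); lra.
Qed.

End T.
Section U.
Context {d : Order.disp_t} {L : finTBLatticeType d} {R : realType}.
Variable phi : L -> R.
Hypothesis hphi : M1 phi.
Variable Phi : {set L} -> R.
Hypothesis hM : Minf Phi.
Hypothesis hext : forall x, Phi (upcl [set x]) = phi x.
Variables (G : {set L}) (E : {set {set L}}).
Hypothesis hg : is_graph G E.
Hypothesis hc : connected G E.

Lemma join_ge (e : {set L}) x : x \in e -> (x <= \join_(y in e) y)%O.
Proof. by move=> xe; rewrite (bigD1 x) //= leUl. Qed.

Lemma grow n : forall (S : {set L}) (T : {set {set L}}),
  (#|G :\: S| <= n)%N -> S \subset G -> S != set0 -> T \subset E ->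
  (forall e, e \in T -> e \subset S) ->
  \sum_(a in S) phi a - \sum_(e in T) phi (\join_(x in e) x)%O <= Phi (upcl S) ->
  phiG phi G E <= Phi (upcl G).
Proof.
case: hphi => h0 hmon.
have fin (S : {set L}) (T : {set {set L}}) : G \subset S -> S \subset G -> T \subset E ->
  \sum_(a in S) phi a - \sum_(e in T) phi (\join_(x in e) x)%O <= Phi (upcl S) ->
  phiG phi G E <= Phi (upcl G).
  move=> GS SG TE inv.
  have eSG : S = G by apply/eqP; rewrite eqEsubset SG GS.
  subst S; apply: le_trans inv; rewrite /phiG lerD2l lerN2.
  rewrite [X in _ <= X](big_setID T) /= (setIidPr TE) lerDl; apply: sumr_ge0 => *; exact: h0.
elim: n => [|n IH] S T hn SG S0 TE TS inv.
  apply: (fin S T) => //; apply/subsetP => x xG.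
  move: hn; rewrite leqn0 cards_eq0 => /eqP /setP /(_ x); rewrite !inE xG andbT.
  by move/negbFE.
have [GS|nGS] := boolP (G \subset S); first exact: (fin S T).
have [/existsP [x /existsP [y /and3P [xS yS xyE]]] | no] :=
  boolP [exists x, exists y, [&& x \in S, y \notin S & [set x; y] \in E]].
- have yG : y \in G by case: (hg xyE) => _ /subsetP; apply; rewrite !inE eqxx orbT.
  have xy : x != y by apply: contraNneq yS => <-.
  have nT : [set x; y] \notin T.
    apply/negP => /TS /subsetP /(_ y); rewrite !inE eqxx orbT => /(_ isT).
    by apply/negP.
  apply: (IH (y |: S) ([set x; y] |: T)).
  + rewrite -ltnS; apply: leq_trans hn; apply: proper_card; apply/properP; split.
      by apply: setDS; apply: subsetUr.
    by exists y; rewrite !inE ?eqxx ?yG ?yS.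
  + by rewrite subUset sub1set yG SG.
  + by apply/set0Pn; exists y; rewrite !inE eqxx.
  + by rewrite subUset sub1set xyE TE.
  + move=> e /setU1P [->|/TS eS].
      by apply/subsetP => z; rewrite !inE => /orP [] /eqP ->; rewrite ?eqxx ?xS ?orbT.
    by apply: subset_trans eS (subsetUr _ _).
  + rewrite big_setU1 //= big_setU1 //=.
    set w := (\join_(z in [set x; y]) z)%O.
    have hS : in_calL (upcl S) by apply: upcl_calL.
    have sub : upcl [set w] \subset upcl S.
      apply/subsetP => z; rewrite in_upcl1 inE => wz; apply/existsP; exists x.
      by rewrite xS (le_trans (join_ge _) wz) // !inE eqxx.
    have yw : (y <= w)%O by apply: join_ge; rewrite !inE eqxx orbT.
    have := step hM hext hS sub yw.
    rewrite setUC -upclU; lra.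
- exfalso.
  have cl : closed (adj E) (mem S).
    move=> u v; rewrite /adj => uvE /=.
    move/existsPn: no => no.
    case uS: (u \in S); case vS: (v \in S) => //.
      by move: (no u) => /existsPn /(_ v); rewrite uS vS uvE.
    by move: (no v) => /existsPn /(_ u); rewrite uS vS setUC uvE.
  move/set0Pn: S0 => [s sS].
  have [g gG gS] : exists2 g, g \in G & g \notin S.
    move/subsetPn: nGS => [g gG gS]; by exists g.
  have sym : connect_sym (adj E).
    by apply: sym_connect_sym => u v; rewrite /adj setUC.
  have := closed_connect cl (hc (subsetP SG _ sS) gG).
  by rewrite sS (negbTE gS).
Qed.
End U.

Unset Implicit Arguments.
Theorem lemma3p9 (d : Order.disp_t) (L : finTBLatticeType d) (R : realType)
  (phi : L -> R) (G : {set L}) (E : {set {set L}}) :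
  M1 phi -> G != set0 -> is_tree G E ->
  phiG phi G E <= Bphi phi (upcl G).
Proof.
move=> hphi G0 [hg hc _].
rewrite /Bphi; apply: lb_le_inf.
- exists (mn phi (upcl G)); exists (mn phi); split => //.
    exact: mn_Minf.
  by move=> x; apply: mn_ext.
- move=> r [Phi [hM hext ->]].
  move/set0Pn: G0 => [g gG].
  apply: (grow hphi hM hext hg hc (n := #|G|) (S := [set g]) (T := set0)).
  + exact/subset_leq_card/subsetDl.
  + by rewrite sub1set.
  + by apply/set0Pn; exists g; rewrite set11.
  + exact: sub0set.
  + by move=> e; rewrite inE.
  + by rewrite big_set1 big_set0 subr0 hext.
Qed.
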